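(* Let $\mathcal{X}\subset\mathbb{R}^n$ be closed convex, let $\mathcal{S}$ be a set, and for each $s$ let $f(\cdot;s):\mathbb{R}^n\to\mathbb{R}$ be convex and subdifferentiable on $\mathcal{X}$. For each $x\in\mathcal{X}$ and $s\in\mathcal{S}$ let $f_x(\cdot;s)$ satisfy (C.i) $y\mapsto f_x(y;s)$ is convex and subdifferentiable on $\mathcal{X}$, and (C.ii) $f_x(x;s)=f(x;s)$ and $f_x(y;s)\le f(y;s)$ for all $y$. Given $x_k\in\mathcal{X}$, $S_k\in\mathcal{S}$, $\alpha_k>0$, let $x_{k+1}=\arg\min_{x\in\mathcal{X}}\{f_{x_k}(x;S_k)+\frac{1}{2\alpha_k}\|x-x_k\|_2^2\}$. Then $\|x_k-x_{k+1}\|_2\le\alpha_k\|f'(x_k;S_k)\|_2$ for some $f'(x_k;S_k)\in\partial f(x_k;S_k)$. *)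

(* Defs.v *)
(* R : realType, R^n represented as row vectors 'rV[R]_n,
   with the (product = Euclidean) topology from MathComp-Analysis. *)
From HB Require Import structures.
From mathcomp Require Import all_boot all_order all_algebra.
From mathcomp Require Import all_classical all_reals all_analysis.
Set Implicit Arguments. Unset Strict Implicit. Unset Printing Implicit Defensive.
Import Order.TTheory GRing.Theory Num.Theory numFieldNormedType.Exports.
Local Open Scope ring_scope.
Local Open Scope classical_set_scope.

Definition dotv {R : realType} {n : nat} (x y : 'rV[R]_n) : R :=
  \sum_(i < n) x ord0 i * y ord0 i.
Definition norm2 {R : realType} {n : nat} (x : 'rV[R]_n) : R :=
  Num.sqrt (dotv x x).

Definition convex_fun_on {R : realType} {n : nat} (D : set 'rV[R]_n)
  (f : 'rV[R]_n -> R) : Prop :=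
  forall x y (t : R), D x -> D y -> 0 <= t -> t <= 1 ->
    f (t *: x + (1 - t) *: y) <= t * f x + (1 - t) * f y.

Definition subgradient {R : realType} {n : nat} (f : 'rV[R]_n -> R)
  (x g : 'rV[R]_n) : Prop :=
  forall y, f x + dotv g (y - x) <= f y.

Definition subdifferentiable_on {R : realType} {n : nat} (f : 'rV[R]_n -> R)
  (X : set 'rV[R]_n) : Prop :=
  forall x, X x -> exists g, subgradient f x g.

Definition is_argmin {R : realType} {n : nat} (F : 'rV[R]_n -> R)
  (X : set 'rV[R]_n) (z : 'rV[R]_n) : Prop :=
  X z /\ forall y, X y -> F z <= F y.

(* Main.v *)
Require Import Defs.
From HB Require Import structures.
From mathcomp Require Import all_boot all_order all_algebra.
From mathcomp Require Import all_classical all_reals all_analysis.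
From mathcomp Require Import ring lra.
Import Order.TTheory GRing.Theory Num.Theory numFieldNormedType.Exports.
Local Open Scope ring_scope.
Local Open Scope classical_set_scope.

Section D.
Context {R : realType} {n : nat}.
Implicit Types a b c : 'rV[R]_n.
Lemma dotvDl a b c : dotv (a + b) c = dotv a c + dotv b c.
Proof. by rewrite /dotv -big_split; apply: eq_bigr => i _; rewrite mxE mulrDl. Qed.
Lemma dotvC a b : dotv a b = dotv b a.
Proof. by rewrite /dotv; apply: eq_bigr => i _; rewrite mulrC. Qed.
Lemma dotvDr a b c : dotv c (a + b) = dotv c a + dotv c b.
Proof. by rewrite dotvC dotvDl !(dotvC c). Qed.
Lemma dotvZl (k : R) a b : dotv (k *: a) b = k * dotv a b.
Proof. by rewrite /dotv mulr_sumr; apply: eq_bigr => i _; rewrite mxE mulrA. Qed.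
Lemma dotvZr (k : R) a b : dotv a (k *: b) = k * dotv a b.
Proof. by rewrite dotvC dotvZl dotvC. Qed.
Lemma dotvNl a b : dotv (- a) b = - dotv a b.
Proof. by rewrite -scaleN1r dotvZl mulN1r. Qed.
Lemma dotvNr a b : dotv a (- b) = - dotv a b.
Proof. by rewrite dotvC dotvNl dotvC. Qed.
Lemma dotv_ge0 a : 0 <= dotv a a.
Proof. by apply: sumr_ge0 => i _; rewrite -expr2 sqr_ge0. Qed.
Lemma norm2_sq a : norm2 a ^+ 2 = dotv a a.
Proof. by rewrite /norm2 sqr_sqrtr // dotv_ge0. Qed.
Lemma dotv_exp (k : R) a b :
  dotv (k *: a + b) (k *: a + b) = k ^+ 2 * dotv a a + 2 * k * dotv a b + dotv b b.
Proof. rewrite !dotvDl !dotvDr !dotvZl !dotvZr (dotvC b a); ring. Qed.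
End D.

Theorem lemma12 (R : realType) (n : nat) (X : set 'rV[R]_n) (S : Type)
  (f : 'rV[R]_n -> S -> R) (fx : 'rV[R]_n -> S -> 'rV[R]_n -> R)
  (hXc : closed X) (hXcvx : convex_set X)
  (hfcvx : forall s, convex_fun_on setT (fun y => f y s))
  (hfsub : forall s, subdifferentiable_on (fun y => f y s) X)
  (hCi_cvx : forall x s, X x -> convex_fun_on setT (fx x s))
  (hCi_sub : forall x s, X x -> subdifferentiable_on (fx x s) X)
  (hCii_eq : forall x s, X x -> fx x s x = f x s)
  (hCii_le : forall x s, X x -> forall y, fx x s y <= f y s)
  (xk xk1 : 'rV[R]_n) (Sk : S) (alpha : R)
  (hxk : X xk) (halpha : 0 < alpha)
  (hmin : is_argmin (fun y => fx xk Sk y + (2 * alpha)^-1 * (norm2 (y - xk)) ^+ 2) X xk1) :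
  exists g, subgradient (fun y => f y Sk) xk g /\
    norm2 (xk - xk1) <= alpha * norm2 g.
Proof.
have [h hh] := hCi_sub xk Sk hxk xk hxk.
exists h; split.
  move=> y /=; rewrite -(hCii_eq xk Sk hxk).
  exact: le_trans (hh y) (hCii_le xk Sk hxk y).
case: hmin => hX1 hm.
set d := xk1 - xk.
set u := dotv d d.
set hd := dotv h d.
set A := fx xk Sk xk.
set B := fx xk Sk xk1.
have hsub : A + hd <= B by exact: hh.
have u0 : 0 <= u by exact: dotv_ge0.
have key : forall t, 0 < t -> t <= 1 -> 2 * alpha * hd <= (t - 2) * u.
  move=> t t0 t1.
  have Xt : X (t *: xk + (1 - t) *: xk1).
    have := hXcvx xk xk1 (Itv01 (ltW t0) t1) (mem_set hxk) (mem_set hX1).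
    by rewrite inE.
  have := hm _ Xt; rewrite /= -/B.
  have -> : t *: xk + (1 - t) *: xk1 - xk = (1 - t) *: d.
    by rewrite /d scalerBr !scalerBl !scale1r opprB [RHS]addrA [t *: xk + _]addrC.
  rewrite !norm2_sq -/u dotvZl dotvZr.
  have hc := hCi_cvx xk Sk hxk xk xk1 t I I (ltW t0) t1.
  rewrite -/A -/B in hc.
  set c := (2 * alpha)^-1.
  have c2 : (2 * alpha) * c = 1 by rewrite mulfV // mulf_neq0 // gt_eqF.
  move=> hI.
  set w := c * u.
  have wu : u = 2 * alpha * w by rewrite /w mulrA c2 mul1r.
  have e0 : t * hd <= t * (B - A) by rewrite ler_pM2l //; lra.
  have ew : c * ((1 - t) * ((1 - t) * u)) = w - 2 * (t * w) + t * (t * w).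
    by rewrite /w; ring.
  rewrite ew in hI.
  have e1 : t * hd <= t * ((t - 2) * w).
    have -> : t * ((t - 2) * w) = t * (t * w) - 2 * (t * w) by ring.
    rewrite (_ : t * (B - A) = t * B - t * A) in e0; last by ring.
    rewrite (_ : (1 - t) * B = B - t * B) in hc; last by ring.
    rewrite -/w in hI; lra.
  rewrite ler_pM2l // in e1.
  rewrite wu; nra.
have hd1 := key 1 ltr01 (lexx _).
have hd0 : alpha * hd <= 0 by nra.
have main : u <= - (alpha * hd).
  case: (leP u (-(alpha * hd))) => // H.
  have upos : 0 < u by lra.
  have tpos : 0 < (u + alpha * hd) / u by apply: divr_gt0 => //; lra.
  have tle1 : (u + alpha * hd) / u <= 1 by rewrite ler_pdivrMr // mul1r; lra.
  have := key _ tpos tle1.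
  rewrite mulrBl divfK ?gt_eqF //; lra.
have hsq := dotv_ge0 (alpha *: h + d).
rewrite dotv_exp -/u -/hd in hsq.
set hh2 := dotv h h in hsq.
have fin : u <= alpha ^+ 2 * hh2 by lra.
have -> : norm2 (xk - xk1) = Num.sqrt u by rewrite /norm2 -opprB dotvNl dotvNr opprK.
have -> : alpha * norm2 h = Num.sqrt (alpha ^+ 2 * hh2).
  by rewrite sqrtrM ?sqr_ge0 // sqrtr_sqr ger0_norm // ltW.
by rewrite ler_sqrt // (le_trans u0 fin).
Qed.
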